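(* Assume the support set $\mathcal U\subseteq\mathbb R^n$ is nonempty, compact and convex. Then the function $f(\mathbf s,\mathbf u)$ is bounded on $\mathcal S\times\mathcal U$, and $f(\mathbf s,\mathbf u)$ is jointly convex in $\mathbf s$ and $\mathbf u$.
   Context: $n\ge1$, $T>0$, $\mathcal S=\{\mathbf s\in\mathbb R^n:\mathbf s\ge0,\sum_is_i\le T\}$; costs $\mathbf c,\mathbf d\in\mathbb R^n_+$, $C\ge0$ with $d_{i+1}-d_i\le c_{i+1}$ for $i=1,\dots,n-1$. $f(\mathbf s,\mathbf u)$ is the optimal value of the linear program $\min_{\mathbf w\in\mathbb R^{n+1},\mathbf v\in\mathbb R^n}\sum_{i=1}^n(c_iw_i+d_iv_i)+Cw_{n+1}$ s.t. $w_i-v_{i-1}=u_{i-1}+w_{i-1}-s_{i-1}$ ($i=2,\dots,n+1$), $\mathbf w\ge0,w_1=0,\mathbf v\ge0$. *)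

(* Defs.v *)
From HB Require Import structures.
From mathcomp Require Import all_boot all_order all_algebra.
From mathcomp Require Import all_classical all_reals all_analysis.
Set Implicit Arguments. Unset Strict Implicit. Unset Printing Implicit Defensive.
Import Order.TTheory GRing.Theory Num.Theory.
Import numFieldNormedType.Exports.
Local Open Scope classical_set_scope.
Local Open Scope ring_scope.

(* Indexing convention (0-based):
   paper s_i, u_i, v_i, c_i, d_i (i = 1..n)  <->  x 0 (i-1) for x : 'rV_n;
   paper w_i (i = 1..n+1)                     <->  w 0 (i-1) for w : 'rV_(n.+1).
   So paper w_1 = w 0 ord0, w_{n+1} = w 0 ord_max, and for i : 'I_n,
   paper w_{i+1} (0-based i) = w 0 (widen_ord (leqnSn n) i),
   paper w_{i+2}             = w 0 (lift ord0 i). *)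

Section LP.
Variables (R : realType) (n : nat).

Definition lp_feasible (s u : 'rV[R]_n) (w : 'rV[R]_n.+1) (v : 'rV[R]_n) : Prop :=
  [/\ forall i : 'I_n,
        w 0 (lift ord0 i) - v 0 i = u 0 i + w 0 (widen_ord (leqnSn n) i) - s 0 i,
      forall j : 'I_n.+1, 0 <= w 0 j,
      w 0 ord0 = 0
    & forall i : 'I_n, 0 <= v 0 i].

Definition lp_obj (c d : 'rV[R]_n) (C : R) (w : 'rV[R]_n.+1) (v : 'rV[R]_n) : R :=
  \sum_(i < n) (c 0 i * w 0 (widen_ord (leqnSn n) i) + d 0 i * v 0 i)
  + C * w 0 ord_max.

Definition f_lp (c d : 'rV[R]_n) (C : R) (s u : 'rV[R]_n) : R :=
  inf [set r : R | exists (w : 'rV[R]_n.+1) (v : 'rV[R]_n),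
                    lp_feasible s u w v /\ r = lp_obj c d C w v].

End LP.

(* Main.v *)
Require Import Defs.
From HB Require Import structures.
From mathcomp Require Import all_boot all_order all_algebra.
From mathcomp Require Import all_classical all_reals all_analysis.
From mathcomp Require Import ring lra.
Import Order.TTheory GRing.Theory Num.Theory.
Import numFieldNormedType.Exports.
Set Implicit Arguments. Unset Strict Implicit.
Local Open Scope classical_set_scope.
Local Open Scope ring_scope.

Section Aux.
Variables (R : realType) (n : nat) (c d : 'rV[R]_n) (C : R).
Hypotheses (hc : forall i : 'I_n, 0 <= c 0 i) (hd : forall i : 'I_n, 0 <= d 0 i)
    (hC : 0 <= C).

Definition E_lp (s u : 'rV[R]_n) := [set r : R | exists (w : 'rV[R]_n.+1) (v : 'rV[R]_n),
                    lp_feasible s u w v /\ r = lp_obj c d C w v].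

Lemma obj_ge0 (s u : 'rV[R]_n) w v : lp_feasible s u w v -> 0 <= lp_obj c d C w v.
Proof.
case=> _ hw _ hv; rewrite /lp_obj addr_ge0 ?mulr_ge0 //.
by apply: sumr_ge0 => i _; rewrite addr_ge0 ?mulr_ge0.
Qed.

Lemma feas_pt (s u : 'rV[R]_n) (B : R) : 0 <= B -> (forall i, `|u 0 i| <= B) -> (forall i, 0 <= s 0 i) ->
  lp_feasible s u (\row_(j < n.+1) (j%:R * B)) (\row_(i < n) (B - u 0 i + s 0 i)).
Proof.
move=> hB hu hs; split.
- move=> i; rewrite !mxE /= /bump /= add1n -addn1 natrD; ring.
- by move=> j; rewrite mxE mulr_ge0.
- by rewrite mxE mul0r.
- move=> i; rewrite mxE addr_ge0 // subr_ge0.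
  exact: le_trans (ler_norm _) (hu i).
Qed.

Lemma lbE (s u : 'rV[R]_n) : has_lbound (E_lp s u).
Proof. by exists 0 => r [w [v [hf ->]]]; exact: obj_ge0 hf. Qed.

Lemma f_ge0 (s u : 'rV[R]_n) : E_lp s u !=set0 -> 0 <= f_lp c d C s u.
Proof. move=> ne; apply: lb_le_inf => // r [w [v [hf ->]]]; exact: obj_ge0 hf. Qed.

Lemma f_le (s u : 'rV[R]_n) w v : lp_feasible s u w v -> f_lp c d C s u <= lp_obj c d C w v.
Proof. move=> hf; apply: ge_inf; [exact: lbE | by exists w, v]. Qed.

Lemma feas_comb (s1 u1 : 'rV[R]_n) w1 v1 (s2 u2 : 'rV[R]_n) w2 v2 (t : R) : 0 <= t -> t <= 1 ->
  lp_feasible s1 u1 w1 v1 -> lp_feasible s2 u2 w2 v2 ->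
  lp_feasible (t *: s1 + (1 - t) *: s2) (t *: u1 + (1 - t) *: u2)
     (t *: w1 + (1 - t) *: w2) (t *: v1 + (1 - t) *: v2).
Proof.
move=> t0 t1 [e1 hw1 z1 hv1] [e2 hw2 z2 hv2]; have t1' : 0 <= 1 - t by rewrite subr_ge0.
split.
- move=> i; rewrite !mxE.
  have := e1 i; have := e2 i => E2 E1.
  have -> : t * w1 0 (lift ord0 i) + (1 - t) * w2 0 (lift ord0 i) - (t * v1 0 i + (1 - t) * v2 0 i)
     = t * (w1 0 (lift ord0 i) - v1 0 i) + (1 - t) * (w2 0 (lift ord0 i) - v2 0 i) by ring.
  rewrite E1 E2; ring.
- by move=> j; rewrite !mxE addr_ge0 ?mulr_ge0.
- by rewrite !mxE z1 z2 !mulr0 addr0.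
- by move=> i; rewrite !mxE addr_ge0 ?mulr_ge0.
Qed.

Lemma obj_comb (w1 : 'rV[R]_n.+1) (v1 : 'rV[R]_n) w2 v2 (t : R) :
  lp_obj c d C (t *: w1 + (1 - t) *: w2) (t *: v1 + (1 - t) *: v2)
  = t * lp_obj c d C w1 v1 + (1 - t) * lp_obj c d C w2 v2.
Proof.
rewrite /lp_obj !mxE !mulrDr !mulr_sumr.
have -> : forall a b x y : R, a + b + (x + y) = (a + x) + (b + y) by move=> *; ring.
rewrite -big_split /=; congr (_ + _); last by ring.
by apply: eq_bigr => i _; rewrite !mxE; ring.
Qed.

End Aux.
Unset Implicit Arguments. Set Strict Implicit.

Theorem lemma4 (R : realType) (n : nat) (T C : R) (c d : 'rV[R]_n)
    (U : set 'rV[R]_n)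
    (hn : (1 <= n)%N) (hT : 0 < T)
    (hc : forall i : 'I_n, 0 <= c 0 i) (hd : forall i : 'I_n, 0 <= d 0 i)
    (hC : 0 <= C)
    (hdc : forall i j : 'I_n, nat_of_ord j = (nat_of_ord i).+1 ->
             d 0 j - d 0 i <= c 0 j)
    (hU0 : U !=set0) (hUc : compact U)
    (hUcvx : forall (x y : 'rV[R]_n) (t : R), U x -> U y -> 0 <= t -> t <= 1 ->
               U (t *: x + (1 - t) *: y)) :
  let S := [set s : 'rV[R]_n | (forall i, 0 <= s 0 i) /\ \sum_(i < n) s 0 i <= T] in
  (exists M : R, forall s u, S s -> U u -> `|f_lp c d C s u| <= M) /\
  (forall (s1 s2 u1 u2 : 'rV[R]_n) (t : R),
     S s1 -> S s2 -> U u1 -> U u2 -> 0 <= t -> t <= 1 ->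
     f_lp c d C (t *: s1 + (1 - t) *: s2) (t *: u1 + (1 - t) *: u2)
       <= t * f_lp c d C s1 u1 + (1 - t) * f_lp c d C s2 u2).
Proof.
move=> S.
have [B [hB0 hB]] : exists B : R, 0 <= B /\ forall u, U u -> forall i, `|u 0 i| <= B.
  case: (compact_bounded hUc) => M [_ HM].
  have := HM (`|M| + 1); rewrite (le_lt_trans (ler_norm M)) ?ltrDl // => /(_ isT) HM'.
  exists (`|M| + 1); split; first by rewrite addr_ge0.
  move=> u Uu i; apply: le_trans (HM' u Uu).
  change (`|u 0 i| <= mx_norm u); rewrite mx_normrE.
  exact: (le_bigmax 0 (fun ij : 'I_1 * 'I_n => `|u ij.1 ij.2|) (ord0, i)).
have feas : forall s u, S s -> U u -> lp_feasible s u
    (\row_(j < n.+1) (j%:R * B)) (\row_(i < n) (B - u 0 i + s 0 i)).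
  by move=> s u [hs _] Uu; apply: feas_pt => //; exact: hB.
have ne : forall s u, S s -> U u -> E_lp c d C s u !=set0.
  by move=> s u Ss Uu; eexists; exists (\row_(j < n.+1) (j%:R * B)), (\row_(i < n) (B - u 0 i + s 0 i)); split; [exact: feas|].
split.
  exists (\sum_(i < n) (c 0 i * (n%:R * B) + d 0 i * (B + B + T)) + C * (n%:R * B)).
  move=> s u Ss Uu; rewrite ger0_norm; last exact: (f_ge0 hc hd hC) (ne _ _ Ss Uu).
  apply: le_trans (f_le hc hd hC (feas _ _ Ss Uu)) _.
  rewrite /lp_obj; apply: lerD; last first.
    by rewrite !mxE ler_wpM2l // ler_wpM2r // ler_nat.
  apply: ler_sum => i _; rewrite !mxE; apply: lerD.
    by rewrite ler_wpM2l // ler_wpM2r // ler_nat /= ltnW.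
  rewrite ler_wpM2l //; case: Ss => hs hsT.
  apply: lerD.
    rewrite lerD2l; apply: le_trans (hB u Uu i).
    by rewrite -normrN ler_norm.
  apply: le_trans hsT.
  rewrite (bigD1 i) //= lerDl; apply: sumr_ge0 => *; exact: hs.
move=> s1 s2 u1 u2 t Ss1 Ss2 Uu1 Uu2 t0 t1.
have t1' : 0 <= 1 - t by rewrite subr_ge0.
apply/ler_addgt0Pr => e e0.
have hi1 : has_inf (E_lp c d C s1 u1) by split; [exact: ne | exact: (lbE hc hd hC)].
have hi2 : has_inf (E_lp c d C s2 u2) by split; [exact: ne | exact: (lbE hc hd hC)].
have [r1 [w1 [v1 [hf1 ->]]] lt1] := inf_adherent e0 hi1.
have [r2 [w2 [v2 [hf2 ->]]] lt2] := inf_adherent e0 hi2.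
apply: le_trans (f_le hc hd hC (feas_comb t0 t1 hf1 hf2)) _.
rewrite obj_comb.
have -> : t * f_lp c d C s1 u1 + (1 - t) * f_lp c d C s2 u2 + e
   = t * (f_lp c d C s1 u1 + e) + (1 - t) * (f_lp c d C s2 u2 + e) by ring.
by apply: lerD; apply: ler_wpM2l => //; apply: ltW.
Qed.
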